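(* Let $k\in\mathbb{R}_{\ge0}$, let $(A,B,C)\in\mathbb{R}_+^3$ be a $k$-initial triple and $(a,b,c)\in\mathbb{R}_+^3$ a $0$-initial triple. Let $\mathbf{w}=[w_1,w_2,\dots]$ be an infinite reduced sequence, and for $n\ge1$ put $(X_n,Y_n,Z_n)=\mathcal{M}_k^{\mathbf{w}_n}(A,B,C)$ and $(x_n,y_n,z_n)=\mathcal{M}^{\mathbf{w}_n}(a,b,c)$. (1) If each of $1,2,3$ appears infinitely many times in $\mathbf{w}$, then there is a real number $q$ such that $\lim_{n\to\infty}X_n/x_n=\lim_{n\to\infty}Y_n/y_n=\lim_{n\to\infty}Z_n/z_n=q$. (2) If some index $i\in\{1,2,3\}$ appears only finitely many times in $\mathbf{w}$, then there is a real number $q$ such that for both indices $j\in\{1,2,3\}\setminus\{i\}$, the ratio of the $j$-th component of $(X_n,Y_n,Z_n)$ to the $j$-th component of $(x_n,y_n,z_n)$ converges to $q$ as $n\to\infty$.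
   Context: For $k\in\mathbb{R}_{\ge0}$ define maps on $\mathbb{R}_+^3$: $\mathcal{M}_{1;k}(X,Y,Z)=(k+Y+Z,Y,Z)$, $\mathcal{M}_{2;k}(X,Y,Z)=(X,k+X+Z,Z)$, $\mathcal{M}_{3;k}(X,Y,Z)=(X,Y,k+X+Y)$, and $\mathcal{M}_i=\mathcal{M}_{i;0}$. A $k$-initial triple is $(A,B,C)\in\mathbb{R}_+^3$ with $A\neq B+C+k$, $B\neq A+C+k$, $C\neq A+B+k$. A sequence $\mathbf{w}=[w_1,w_2,\dots]$ with $w_i\in\{1,2,3\}$ is reduced if $w_i\neq w_{i+1}$ for all $i$; $\mathbf{w}_n=[w_1,\dots,w_n]$, and $\mathcal{M}_k^{\mathbf{w}_n}=\mathcal{M}_{w_n;k}\circ\cdots\circ\mathcal{M}_{w_1;k}$, $\mathcal{M}^{\mathbf{w}_n}=\mathcal{M}_{w_n}\circ\cdots\circ\mathcal{M}_{w_1}$. (The triples $\mathcal{M}_k^{\mathbf{w}}(A,B,C)$ form the $k$-generalized Euclid tree; for $k=0$ the classical Euclid tree.) *)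

(* Defs.v *)
From Stdlib Require Import Reals Lra.
Open Scope R_scope.

Definition triple := (R * R * R)%type.
Definition t1 (t : triple) : R := fst (fst t).
Definition t2 (t : triple) : R := snd (fst t).
Definition t3 (t : triple) : R := snd t.
Definition tcomp (j : nat) (t : triple) : R :=
  match j with 1%nat => t1 t | 2%nat => t2 t | _ => t3 t end.

Definition Mk (k : R) (i : nat) (t : triple) : triple :=
  let '(X, Y, Z) := t in
  match i with
  | 1%nat => (k + Y + Z, Y, Z)
  | 2%nat => (X, k + X + Z, Z)
  | _ => (X, Y, k + X + Y)
  end.

(* w : nat -> nat, with w 0 = w_1, w 1 = w_2, ...
   Mseq k w n t = M_{w_n;k} o ... o M_{w_1;k} (t) *)
Fixpoint Mseq (k : R) (w : nat -> nat) (n : nat) (t : triple) : triple :=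
  match n with
  | O => t
  | S m => Mk k (w m) (Mseq k w m t)
  end.

Definition pos_triple (t : triple) : Prop := 0 < t1 t /\ 0 < t2 t /\ 0 < t3 t.

Definition k_initial (k : R) (t : triple) : Prop :=
  pos_triple t /\
  t1 t <> t2 t + t3 t + k /\ t2 t <> t1 t + t3 t + k /\ t3 t <> t1 t + t2 t + k.

Definition reduced (w : nat -> nat) : Prop :=
  (forall n, (w n = 1 \/ w n = 2 \/ w n = 3)%nat) /\ (forall n, w n <> w (S n)).

Definition appears_inf (w : nat -> nat) (i : nat) : Prop :=
  forall N : nat, exists n : nat, (N <= n)%nat /\ w n = i.

(* Main.v *)
Require Import Defs.
From Stdlib Require Import Reals Lra Lia Psatz ZArith Classical.
Open Scope R_scope.
Ltac icase i := destruct i as [|[|[|[|i]]]]; try lia.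
Ltac smp := unfold tcomp, t1, t2, t3 in *; simpl in *.

Lemma nat_above (r : R) : exists N : nat, r < INR N.
Proof.
  destruct (archimed r) as [H1 _].
  destruct (Z_lt_le_dec (up r) 0) as [Hl|Hl].
  - exists 0%nat. simpl. apply IZR_lt in Hl. lra.
  - exists (Z.to_nat (up r)). rewrite INR_IZR_INZ, Z2Nat.id by lia. lra.
Qed.

Definition o1 (i : nat) : nat := match i with 1%nat => 2%nat | _ => 1%nat end.
Definition o2 (i : nat) : nat := match i with 3%nat => 2%nat | _ => 3%nat end.


Lemma o_props i : (1 <= i <= 3)%nat ->
  (1 <= o1 i <= 3)%nat /\ (1 <= o2 i <= 3)%nat /\ o1 i <> i /\ o2 i <> i.
Proof. intros; icase i; simpl; lia. Qed.

Lemma tcomp_Mk_other k i j t : (1 <= i <= 3)%nat -> (1 <= j <= 3)%nat -> j <> i ->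
  tcomp j (Mk k i t) = tcomp j t.
Proof. intros; destruct t as [[X Y] Z]; icase i; icase j; reflexivity. Qed.

Definition sh (c : R) (t : triple) : triple := (t1 t + c, t2 t + c, t3 t + c).

Lemma Mseq_shift k w T n : Mseq 0 w n (sh k T) = sh k (Mseq k w n T).
Proof.
  induction n; simpl; [reflexivity|]. rewrite IHn.
  destruct (Mseq k w n T) as [[X Y] Z]. unfold sh, t1, t2, t3; simpl.
  destruct (w n) as [|[|[|]]]; simpl; apply (f_equal2 pair); try apply (f_equal2 pair); ring.
Qed.

Lemma tcomp_sh j c t : tcomp j (sh c t) = tcomp j t + c.
Proof. destruct j as [|[|[|]]]; reflexivity. Qed.

Definition mu (u : triple) := Rmin (t1 u) (Rmin (t2 u) (t3 u)).

Lemma mu_pos u : pos_triple u -> 0 < mu u.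
Proof. intros [? [? ?]]. unfold mu. repeat apply Rmin_glb_lt; auto. Qed.

Lemma ge_mu w u : pos_triple u -> forall n j, mu u <= tcomp j (Mseq 0 w n u).
Proof.
  intros Hp. pose proof (mu_pos u Hp) as Hm.
  assert (forall n, mu u <= t1 (Mseq 0 w n u) /\ mu u <= t2 (Mseq 0 w n u) /\ mu u <= t3 (Mseq 0 w n u)).
  { induction n; simpl.
    - unfold mu. repeat split.
      + apply Rmin_l.
      + eapply Rle_trans; [apply Rmin_r|apply Rmin_l].
      + eapply Rle_trans; [apply Rmin_r|apply Rmin_r].
    - destruct (Mseq 0 w n u) as [[x y] z]. unfold t1,t2,t3 in *; simpl in *.
      destruct (w n) as [|[|[|]]]; simpl; lra. }
  intros n j. destruct (H n) as [? [? ?]]. destruct j as [|[|[|]]]; simpl; auto.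
Qed.

Lemma step_D p pv i i' : (1 <= i <= 3)%nat -> (1 <= i' <= 3)%nat -> i <> i' ->
  let s := Mk 0 i p in let S := Mk 0 i pv in
  let s' := Mk 0 i' s in let S' := Mk 0 i' S in
  Rabs (tcomp (o1 i') S' * tcomp (o2 i') s' - tcomp (o2 i') S' * tcomp (o1 i') s')
  = Rabs (tcomp (o1 i) S * tcomp (o2 i) s - tcomp (o2 i) S * tcomp (o1 i) s).
Proof.
  cbv zeta; intros. destruct p as [[x y] z]; destruct pv as [[X Y] Z].
  icase i; icase i'; smp;
  first [ f_equal; ring | rewrite <- Rabs_Ropp; f_equal; ring ].
Qed.

Lemma step_P p i i' m : (1 <= i <= 3)%nat -> (1 <= i' <= 3)%nat -> i <> i' ->
  0 < m -> (forall j, m <= tcomp j p) ->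
  let s := Mk 0 i p in let s' := Mk 0 i' s in
  tcomp (o1 i') s' * tcomp (o2 i') s' >= tcomp (o1 i) s * tcomp (o2 i) s + m * m.
Proof.
  cbv zeta; intros. destruct p as [[x y] z].
  pose proof (H3 1%nat); pose proof (H3 2%nat); pose proof (H3 3%nat). smp.
  icase i; icase i'; smp; nra.
Qed.

Lemma step_mono p i i' j : (1 <= i <= 3)%nat -> (1 <= i' <= 3)%nat -> i <> i' ->
  (1 <= j <= 3)%nat -> (forall j, 0 < tcomp j p) ->
  let s := Mk 0 i p in let s' := Mk 0 i' s in
  tcomp j s <= tcomp j s'.
Proof.
  cbv zeta; intros. destruct p as [[x y] z].
  pose proof (H3 1%nat); pose proof (H3 2%nat); pose proof (H3 3%nat). smp.
  icase i; icase i'; icase j; smp; lra.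
Qed.

Lemma sum_Mk p i : (1 <= i <= 3)%nat ->
  tcomp i (Mk 0 i p) = tcomp (o1 i) (Mk 0 i p) + tcomp (o2 i) (Mk 0 i p).
Proof. intros. destruct p as [[x y] z]. icase i; smp; ring. Qed.

Lemma mediant A B a b : 0 < a -> 0 < b ->
  Rmin (A/a) (B/b) <= (A+B)/(a+b) <= Rmax (A/a) (B/b).
Proof.
  intros Ha Hb. set (r := A/a). set (s := B/b).
  assert (E1 : (A+B)/(a+b) - r = b*(s-r)/(a+b)) by (unfold r, s; field; lra).
  assert (E2 : s - (A+B)/(a+b) = a*(s-r)/(a+b)) by (unfold r, s; field; lra).
  assert (Hi : 0 < / (a+b)) by (apply Rinv_0_lt_compat; lra).
  unfold Rdiv in E1, E2.
  unfold Rmin, Rmax; destruct (Rle_dec r s).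
  - split; [| ]. 
    + assert (0 <= b*(s-r)* / (a+b)) by (apply Rmult_le_pos; [apply Rmult_le_pos|]; lra). lra.
    + assert (0 <= a*(s-r)* / (a+b)) by (apply Rmult_le_pos; [apply Rmult_le_pos|]; lra). lra.
  - split.
    + assert (0 <= a*(r-s)* / (a+b)) by (apply Rmult_le_pos; [apply Rmult_le_pos|]; lra).
      assert (a*(s-r)* / (a+b) = - (a*(r-s)* / (a+b))) by ring. lra.
    + assert (0 <= b*(r-s)* / (a+b)) by (apply Rmult_le_pos; [apply Rmult_le_pos|]; lra).
      assert (b*(s-r)* / (a+b) = - (b*(r-s)* / (a+b))) by ring. lra.
Qed.

Lemma in_Mk p pv i j : (1 <= i <= 3)%nat -> (1 <= j <= 3)%nat -> (forall j, 0 < tcomp j p) ->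
  let r := fun j => tcomp j (Mk 0 i pv) / tcomp j (Mk 0 i p) in
  Rmin (r (o1 i)) (r (o2 i)) <= r j <= Rmax (r (o1 i)) (r (o2 i)).
Proof.
  cbv zeta; intros. destruct p as [[x y] z]; destruct pv as [[X Y] Z].
  pose proof (H1 1%nat); pose proof (H1 2%nat); pose proof (H1 3%nat). smp.
  icase i; icase j; smp; rewrite ?Rplus_0_l;
  first [ apply mediant; lra
        | split; [apply Rmin_l | apply Rmax_l]
        | split; [apply Rmin_r | apply Rmax_r] ].
Qed.

Definition xs w u m j := tcomp j (Mseq 0 w (S m) u).
Definition rho w u V m j := xs w V m j / xs w u m j.
Definition lo w u V m := Rmin (rho w u V m (o1 (w m))) (rho w u V m (o2 (w m))).
Definition hi w u V m := Rmax (rho w u V m (o1 (w m))) (rho w u V m (o2 (w m))).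
Definition PP w u m := xs w u m (o1 (w m)) * xs w u m (o2 (w m)).
Definition Dl w u V m := Rabs (xs w V m (o1 (w m)) * xs w u m (o2 (w m))
                               - xs w V m (o2 (w m)) * xs w u m (o1 (w m))).

Definition rng (w : nat -> nat) := forall n, (1 <= w n <= 3)%nat.
Definition red (w : nat -> nat) := rng w /\ forall n, w n <> w (S n).

Lemma xs_pos w u : pos_triple u -> forall m j, 0 < xs w u m j.
Proof. intros Hp m j. pose proof (mu_pos u Hp). pose proof (ge_mu w u Hp (S m) j). unfold xs. lra. Qed.

Lemma xs_ge_mu w u : pos_triple u -> forall m j, mu u <= xs w u m j.
Proof. intros Hp m j. apply (ge_mu w u Hp (S m) j). Qed.

Lemma p_pos w u : pos_triple u -> forall n j, 0 < tcomp j (Mseq 0 w n u).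
Proof. intros Hp n j. pose proof (mu_pos u Hp). pose proof (ge_mu w u Hp n j). lra. Qed.

Lemma L_in w u V m j : rng w -> pos_triple u -> (1 <= j <= 3)%nat ->
  lo w u V m <= rho w u V m j <= hi w u V m.
Proof.
  intros Hr Hp Hj. unfold lo, hi, rho, xs. cbn [Mseq].
  apply (in_Mk (Mseq 0 w m u) (Mseq 0 w m V) (w m) j (Hr m) Hj).
  intros; apply p_pos; auto.
Qed.

Lemma rho_S_other w u V m j : rng w -> (1 <= j <= 3)%nat -> j <> w (S m) ->
  rho w u V (S m) j = rho w u V m j.
Proof.
  intros Hr Hj Hne. unfold rho, xs. cbn [Mseq].
  rewrite !(tcomp_Mk_other 0 (w (S m)) j) by auto. reflexivity.
Qed.

Lemma xs_S_other w u m j : rng w -> (1 <= j <= 3)%nat -> j <> w (S m) ->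
  xs w u (S m) j = xs w u m j.
Proof.
  intros Hr Hj Hne. unfold xs. cbn [Mseq].
  rewrite !(tcomp_Mk_other 0 (w (S m)) j) by auto. reflexivity.
Qed.

Lemma L_mono w u V m : rng w -> pos_triple u ->
  lo w u V m <= lo w u V (S m) /\ hi w u V (S m) <= hi w u V m.
Proof.
  intros Hr Hp. destruct (o_props (w (S m)) (Hr (S m))) as [H1 [H2 [H3 H4]]].
  unfold lo at 2; unfold hi at 1.
  rewrite !rho_S_other by auto.
  pose proof (L_in w u V m (o1 (w (S m))) Hr Hp H1).
  pose proof (L_in w u V m (o2 (w (S m))) Hr Hp H2).
  split; [apply Rmin_glb | apply Rmax_lub]; lra.
Qed.

Lemma maxmin r s : Rmax r s - Rmin r s = Rabs (r - s).
Proof. unfold Rmax, Rmin, Rabs; destruct (Rle_dec r s); destruct (Rcase_abs (r - s)); lra. Qed.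

Lemma L_gap w u V m : pos_triple u ->
  hi w u V m - lo w u V m = Dl w u V m / PP w u m.
Proof.
  intros Hp. unfold hi, lo, Dl, PP, rho. rewrite maxmin.
  set (a := xs w u m (o1 (w m))). set (b := xs w u m (o2 (w m))).
  set (A := xs w V m (o1 (w m))). set (B := xs w V m (o2 (w m))).
  assert (0 < a) by apply xs_pos, Hp. assert (0 < b) by apply xs_pos, Hp.
  replace (A / a - B / b) with ((A * b - B * a) / (a * b)) by (field; lra).
  unfold Rdiv. rewrite Rabs_mult, Rabs_inv. rewrite (Rabs_pos_eq (a*b)) by nra. reflexivity.
Qed.

Lemma L_D w u V m : red w -> Dl w u V (S m) = Dl w u V m.
Proof.
  intros [Hr Hn]. unfold Dl, xs. cbn [Mseq].
  apply (step_D (Mseq 0 w m u) (Mseq 0 w m V) (w m) (w (S m))); auto.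
Qed.

Lemma L_D0 w u V m : red w -> Dl w u V m = Dl w u V 0.
Proof. intros H; induction m; auto. rewrite L_D; auto. Qed.

Lemma L_P w u m : red w -> pos_triple u -> PP w u (S m) >= PP w u m + mu u * mu u.
Proof.
  intros [Hr Hn] Hp. unfold PP, xs. cbn [Mseq].
  apply (step_P (Mseq 0 w m u) (w m) (w (S m))); auto.
  apply mu_pos; auto. intros; apply ge_mu; auto.
Qed.

Lemma L_P0 w u m : red w -> pos_triple u -> PP w u m >= INR m * (mu u * mu u).
Proof.
  intros H Hp. induction m.
  - simpl. unfold PP. pose proof (xs_pos w u Hp 0%nat (o1 (w 0%nat))). pose proof (xs_pos w u Hp 0%nat (o2 (w 0%nat))). nra.
  - pose proof (L_P w u m H Hp). rewrite S_INR. nra.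
Qed.

Lemma xs_mono w u m j : red w -> pos_triple u -> (1 <= j <= 3)%nat -> xs w u m j <= xs w u (S m) j.
Proof.
  intros [Hr Hn] Hp Hj. unfold xs. cbn [Mseq].
  apply (step_mono (Mseq 0 w m u) (w m) (w (S m)) j); auto.
  intros; apply p_pos; auto.
Qed.

Lemma xs_mono_le w u m n j : red w -> pos_triple u -> (1 <= j <= 3)%nat -> (m <= n)%nat ->
  xs w u m j <= xs w u n j.
Proof.
  intros H Hp Hj Hmn. induction Hmn; [lra|]. pose proof (xs_mono w u m0 j H Hp Hj). lra.
Qed.

Lemma xs_upd w u m : rng w -> xs w u m (w m) = xs w u m (o1 (w m)) + xs w u m (o2 (w m)).
Proof. intros Hr. unfold xs. cbn [Mseq]. apply sum_Mk, Hr. Qed.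

Lemma Rdiv_le_0_compat a b : 0 <= a -> 0 < b -> 0 <= a / b.
Proof. intros. unfold Rdiv. apply Rmult_le_pos; [auto| left; apply Rinv_0_lt_compat; auto]. Qed.

Lemma div_lt a b e : 0 < b -> 0 < e -> a < e * b -> a / b < e.
Proof.
  intros Hb He H. apply (Rmult_lt_reg_r b); auto.
  unfold Rdiv. rewrite Rmult_assoc, Rinv_l by lra. lra.
Qed.

Lemma gap_small w u V : red w -> pos_triple u ->
  forall e, 0 < e -> exists N, forall m, (N <= m)%nat -> hi w u V m - lo w u V m < e.
Proof.
  intros H Hp e He. set (c := mu u * mu u).
  assert (Hc : 0 < c) by (pose proof (mu_pos u Hp); unfold c; nra).
  set (D := Dl w u V 0).
  assert (HD : 0 <= D) by apply Rabs_pos.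
  destruct (nat_above (D / (c * e))) as [N HN].
  exists N. intros m Hm.
  rewrite L_gap by auto. rewrite L_D0 by auto. fold D.
  pose proof (L_P0 w u m H Hp) as HP. fold c in HP.
  assert (HNm : INR N <= INR m) by (apply le_INR; auto).
  assert (D < INR m * c * e).
  { assert (D / (c*e) * (c*e) < INR m * (c*e)) by (apply Rmult_lt_compat_r; nra).
    replace (D / (c*e) * (c*e)) with D in H0 by (field; lra). lra. }
  assert (0 < INR m) by (assert (0 <= D/(c*e)) by (apply Rdiv_le_0_compat; nra); lra).
  apply div_lt; nra.
Qed.

Lemma hi_le0 w u V m : red w -> pos_triple u -> hi w u V m <= hi w u V 0.
Proof.
  intros [Hr Hn] Hp. induction m; [lra|].
  pose proof (L_mono w u V m Hr Hp). lra.
Qed.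

Lemma rho_cv w u V : red w -> pos_triple u ->
  exists q, forall j, (1 <= j <= 3)%nat -> Un_cv (fun m => rho w u V m j) q.
Proof.
  intros H Hp. pose proof H as [Hr Hn].
  assert (Hg : Un_growing (lo w u V)) by (intro m; apply (L_mono w u V m Hr Hp)).
  assert (Hb : has_ub (lo w u V)).
  { exists (hi w u V 0). intros x [m ->].
    destruct (o_props (w m) (Hr m)) as [H1 _].
    pose proof (L_in w u V m _ Hr Hp H1). pose proof (hi_le0 w u V m H Hp). lra. }
  destruct (growing_cv _ Hg Hb) as [q Hq].
  exists q. intros j Hj e He.
  destruct (Hq (e/2)) as [N1 HN1]; [lra|].
  destruct (gap_small w u V H Hp (e/2)) as [N2 HN2]; [lra|].
  exists (max N1 N2). intros m Hm.
  specialize (HN1 m ltac:(lia)). specialize (HN2 m ltac:(lia)).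
  pose proof (L_in w u V m j Hr Hp Hj).
  unfold Rdist in *. unfold Rabs in *.
  destruct (Rcase_abs (lo w u V m - q)); destruct (Rcase_abs (rho w u V m j - q)); lra.
Qed.

Lemma kx_cv w u j k : red w -> pos_triple u -> (1 <= j <= 3)%nat -> 0 <= k ->
  appears_inf w j -> Un_cv (fun m => k / xs w u m j) 0.
Proof.
  intros H Hp Hj Hk Hinf e He. pose proof H as [Hr Hn].
  set (c := mu u * mu u).
  assert (Hc : 0 < c) by (pose proof (mu_pos u Hp); unfold c; nra).
  set (K := k / e).
  assert (HK : 0 <= K) by (apply Rdiv_le_0_compat; lra).
  destruct (nat_above (K * K / c)) as [N HN].
  destruct (Hinf N) as [m [Hm Hwm]].
  exists m. intros n Hmn.
  pose proof (xs_mono_le w u m n j H Hp Hj Hmn).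
  pose proof (xs_upd w u m Hr) as Hu. rewrite Hwm in Hu.
  pose proof (L_P0 w u m H Hp) as HP. fold c in HP. unfold PP in HP. rewrite Hwm in HP.
  set (a := xs w u m (o1 j)) in *. set (b := xs w u m (o2 j)) in *.
  assert (0 < a) by apply xs_pos, Hp. assert (0 < b) by apply xs_pos, Hp.
  assert (HNm : INR N <= INR m) by (apply le_INR; auto).
  assert (K * K < INR m * c).
  { assert (K * K / c * c < INR m * c) by (apply Rmult_lt_compat_r; lra).
    replace (K * K / c * c) with (K*K) in H3 by (field; lra). lra. }
  assert (Hab : K < a + b) by (destruct (Rlt_or_le K (a+b)); [auto| nra]).
  set (x := xs w u n j) in *.
  assert (k < e * x) by (unfold K in Hab; assert (k/e*e = k) by (field; lra); nra).
  assert (0 <= k / x) by (apply Rdiv_le_0_compat; lra).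
  unfold Rdist. rewrite Rminus_0_r, Rabs_pos_eq by auto.
  apply div_lt; lra.
Qed.

Theorem theorem5p10 (k : R) (T t : triple) (w : nat -> nat) :
  0 <= k -> k_initial k T -> k_initial 0 t -> reduced w ->
  ((forall i, (1 <= i <= 3)%nat -> appears_inf w i) ->
     exists q : R, forall j, (1 <= j <= 3)%nat ->
       Un_cv (fun n => tcomp j (Mseq k w (S n) T) / tcomp j (Mseq 0 w (S n) t)) q)
  /\
  (forall i, (1 <= i <= 3)%nat -> ~ appears_inf w i ->
     exists q : R, forall j, (1 <= j <= 3)%nat -> j <> i ->
       Un_cv (fun n => tcomp j (Mseq k w (S n) T) / tcomp j (Mseq 0 w (S n) t)) q).
Proof.
  intros Hk _ [Hp _] [Hw1 Hw2].
  assert (H : red w) by (split; [intro n; destruct (Hw1 n) as [->|[->| ->]]; lia | auto]).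
  set (V := sh k T).
  destruct (rho_cv w t V H Hp) as [q Hq].
  assert (Hfin : forall j, (1 <= j <= 3)%nat -> appears_inf w j ->
    Un_cv (fun n => tcomp j (Mseq k w (S n) T) / tcomp j (Mseq 0 w (S n) t)) q).
  { intros j Hj Hinf.
    pose proof (CV_minus _ _ _ _ (Hq j Hj) (kx_cv w t j k H Hp Hj Hk Hinf)) as Hc.
    rewrite Rminus_0_r in Hc.
    intros e He. destruct (Hc e He) as [N HN]. exists N. intros n Hn.
    specialize (HN n Hn).
    replace (tcomp j (Mseq k w (S n) T) / tcomp j (Mseq 0 w (S n) t))
      with (rho w t V n j - k / xs w t n j); auto.
    unfold rho, xs, V. rewrite Mseq_shift, tcomp_sh.
    pose proof (xs_pos w t Hp n j) as Hx. unfold xs in Hx. field. lra. }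
  split.
  - intros Hall. exists q. intros j Hj. apply Hfin; auto.
  - intros i Hi Hni. exists q. intros j Hj Hji. apply Hfin; auto.
    assert (HN : exists N, forall n, (N <= n)%nat -> w n <> i).
    { unfold appears_inf in Hni. apply not_all_ex_not in Hni. destruct Hni as [N HN].
      exists N. intros n Hn He. apply HN. exists n. auto. }
    destruct HN as [N HN]. destruct H as [Hr Hn].
    intro M. set (n := max N M).
    destruct (Nat.eq_dec (w n) j) as [E|E].
    + exists n. split; [lia|auto].
    + exists (S n). split; [lia|].
      pose proof (HN n ltac:(lia)). pose proof (HN (S n) ltac:(lia)).
      pose proof (Hr n). pose proof (Hr (S n)). pose proof (Hn n). lia.
Qed.
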